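(* Let $\mathcal{D}',\mathcal{D}''$ be two inputs of $\mathsf{SGDsub}$ that differ only in the user $Z_{1,1}$ (replaced by $Z'_{1,1}$), both run from the same initial point $x_0$ with the same parameters and with threshold parameter $\varsigma\ge0$ in $\mathsf{RobustEst}$; let $x_1$ and $y_1$ be the respective first iterates. If for some $\rho>0$ the pair $(\mathcal{D}',\mathcal{D}'')$ is $\rho$-aligned, then $\|x_1-y_1\|_\infty\le\eta(4\rho+2\varsigma)$.
   Context: $\mathcal{X}\subset\mathbb{R}^d$ is an $\ell_\infty$-ball, $\Pi_{\mathcal{X}}$ Euclidean projection onto it; $f(\cdot;z)$ are differentiable losses; each user is a set of $m$ data points. Robust statistic: a coordinatewise map $(X_1,\dots,X_B)\mapsto X_{\mathrm{rs}}\in\mathbb{R}^d$ such that (i) for any $\rho\ge0$, if more than $B/2$ of the $X_i$ lie in $B_\infty(X',\rho)$ then $X_{\mathrm{rs}}\in B_\infty(X',\rho)$; (ii) if $\|Y_i-X_i\|_\infty\le\Delta$ for all $i$ then $\|X_{\mathrm{rs}}-Y_{\mathrm{rs}}\|_\infty\le\Delta$; (iii) $(aX_i+b)_{\mathrm{rs}}=aX_{\mathrm{rs}}+b$. $\mathsf{RobustEst}(X_1,\dots,X_B;\varsigma)$: for each coordinate $j$ with $\bar x[j]=\frac1B\sum_iX_i[j]$, output the projection of $\bar x[j]$ onto $[X_{\mathrm{rs}}[j]-\varsigma,X_{\mathrm{rs}}[j]+\varsigma]$ if $|X_{\mathrm{rs}}[j]-\bar x[j]|\ge\varsigma$, else $\bar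 x[j]$. $\mathsf{SGDsub}$ with step size $\eta$: users split into groups $\{Z_{i,t}\}_{t\in[T]}$, $i\in[B]$; at step $t$, $q_t(Z_{i,t})=\frac1m\sum_{z\in Z_{i,t}}\nabla f(x_{t-1};z)$, $g_{t-1}=\mathsf{RobustEst}(q_t(Z_{1,t}),\dots,q_t(Z_{B,t});\varsigma)$, $x_t=\Pi_{\mathcal{X}}(x_{t-1}-\eta g_{t-1})$; write $q'_t$, $y_t$ for the analogous quantities on $\mathcal{D}''$. The pair is $\rho$-aligned if there are points $X',Y'$ with $|\{i\in[B]:q_1(Z_{i,1})\in B_\infty(X',\rho)\}|\ge 2B/3$ and $|\{i\in[B]:q'_1(Z'_{i,1})\in B_\infty(Y',\rho)\}|\ge2B/3$ (where $Z'_{i,1}=Z_{i,1}$ for $i\neq1$).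
   Formalization: The number B of groups into which SGDsub splits the users is at least 4. The statement above fails without it. *)

(* Defs.v *)
From HB Require Import structures.
From mathcomp Require Import all_boot all_order all_algebra.
Set Implicit Arguments. Unset Strict Implicit. Unset Printing Implicit Defensive.
Import Order.TTheory GRing.Theory Num.Theory.
Local Open Scope ring_scope.

Section Defs.
Variable R : realFieldType.

Definition linf {d : nat} (v : 'rV[R]_d) : R := \big[Num.max/0]_(j < d) `|v 0 j|.

Definition in_ballinf {d : nat} (c : 'rV[R]_d) (r : R) (x : 'rV[R]_d) : bool :=
  linf (x - c) <= r.

Definition sqdist {d : nat} (x y : 'rV[R]_d) : R := \sum_(j < d) (x 0 j - y 0 j) ^+ 2.

Definition is_eucl_proj_ballinf {d : nat} (c : 'rV[R]_d) (r : R)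
    (Pi : 'rV[R]_d -> 'rV[R]_d) : Prop :=
  forall x, in_ballinf c r (Pi x) /\
            (forall y, in_ballinf c r y -> sqdist x (Pi x) <= sqdist x y).

Definition robust_statistic {d B : nat}
    (rs : ('I_B -> 'rV[R]_d) -> 'rV[R]_d) : Prop :=
  [/\ (forall (X Y : 'I_B -> 'rV[R]_d) (j : 'I_d), (forall i, X i 0 j = Y i 0 j) -> rs X 0 j = rs Y 0 j),
      (forall (rho : R) (X : 'I_B -> 'rV[R]_d) (X' : 'rV[R]_d), 0 <= rho ->
         (B < 2 * #|[set i | in_ballinf X' rho (X i)]|)%N ->
         in_ballinf X' rho (rs X)),
      (forall (Delta : R) (X Y : 'I_B -> 'rV[R]_d),
         (forall i, linf (Y i - X i) <= Delta) -> linf (rs X - rs Y) <= Delta)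
  &
      (forall (a : R) (b : 'rV[R]_d) (X : 'I_B -> 'rV[R]_d),
         rs (fun i => a *: X i + b) = a *: rs X + b)].

Definition clamp (lo hi v : R) : R := Num.max lo (Num.min v hi).

Definition RobustEst {d B : nat} (rs : ('I_B -> 'rV[R]_d) -> 'rV[R]_d)
    (X : 'I_B -> 'rV[R]_d) (vs : R) : 'rV[R]_d :=
  \row_(j < d)
    let xbar := B%:R^-1 * \sum_(i < B) X i 0 j in
    let xrs := rs X 0 j in
    if vs <= `|xrs - xbar| then clamp (xrs - vs) (xrs + vs) xbar else xbar.

Definition qgrad {Zt : Type} {d m : nat} (grad : 'rV[R]_d -> Zt -> 'rV[R]_d)
    (x : 'rV[R]_d) (Z : 'I_m -> Zt) : 'rV[R]_d :=
  m%:R^-1 *: \sum_(k < m) grad x (Z k).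

Definition SGDsub_step {Zt : Type} {d m B : nat}
    (grad : 'rV[R]_d -> Zt -> 'rV[R]_d) (Pi : 'rV[R]_d -> 'rV[R]_d)
    (rs : ('I_B -> 'rV[R]_d) -> 'rV[R]_d) (eta vs : R)
    (users_t : 'I_B -> 'I_m -> Zt) (x : 'rV[R]_d) : 'rV[R]_d :=
  Pi (x - eta *: RobustEst rs (fun i => qgrad grad x (users_t i)) vs).

Definition rho_aligned {d B : nat} (rho : R) (q1 q1' : 'I_B -> 'rV[R]_d) : Prop :=
  exists X' Y' : 'rV[R]_d,
    (2 * B <= 3 * #|[set i | in_ballinf X' rho (q1 i)]|)%N /\
    (2 * B <= 3 * #|[set i | in_ballinf Y' rho (q1' i)]|)%N.

End Defs.

(* Main.v *)
Require Import Defs.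
From HB Require Import structures.
From mathcomp Require Import all_boot all_order all_algebra.
From mathcomp Require Import ring lra zify.
Import Order.TTheory GRing.Theory Num.Theory.
Local Open Scope ring_scope.

Section H.
Variable R : realFieldType.

Lemma linf_leP {d} (v : 'rV[R]_d) a :
  reflect (0 <= a /\ forall j, `|v 0 j| <= a) (linf v <= a).
Proof.
rewrite /linf; apply: (iffP (bigmax_leP _ _ _ _)) => [[h1 h2]|[h1 h2]]; split=> //.
by move=> j; apply: h2.
Qed.

Lemma linf_coord {d} (v : 'rV[R]_d) j : `|v 0 j| <= linf v.
Proof. have /linf_leP[_] := lexx (linf v); exact. Qed.

Lemma ball_coord {d} (c : 'rV[R]_d) r x j : in_ballinf c r x -> `|x 0 j - c 0 j| <= r.
Proof. by move=> /linf_leP[_ /(_ j)]; rewrite !mxE. Qed.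

Lemma max_lip (c x y : R) : `|Num.max c x - Num.max c y| <= `|x - y|.
Proof.
have h1 := ler_norm (x - y); have h2 : -(x-y) <= `|x - y| by rewrite -normrN ler_norm.
rewrite ler_norml; rewrite /Num.max; case: (ltP c x); case: (ltP c y) => *; apply/andP; split; lra.
Qed.
Lemma min_lip (c x y : R) : `|Num.min x c - Num.min y c| <= `|x - y|.
Proof.
have h1 := ler_norm (x - y); have h2 : -(x-y) <= `|x - y| by rewrite -normrN ler_norm.
rewrite ler_norml; rewrite /Num.min; case: (ltP x c); case: (ltP y c) => *; apply/andP; split; lra.
Qed.
Lemma clamp_lip (lo hi a b : R) :
  `|clamp lo hi a - clamp lo hi b| <= `|a - b|.
Proof. exact: le_trans (max_lip _ _ _) (min_lip _ _ _). Qed.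
Lemma clamp_in (lo hi a : R) : lo <= hi -> lo <= clamp lo hi a <= hi.
Proof.
rewrite /clamp /Num.max /Num.min => h; case: (ltP a hi) => ha /=; [case: (ltP lo a) | case: (ltP lo hi)] => hb /=; apply/andP; split; lra.
Qed.
Lemma clamp_best (lo hi a p : R) : lo <= p <= hi ->
  (a - clamp lo hi a) ^+ 2 <= (a - p) ^+ 2.
Proof.
move=> /andP[h1 h2]; rewrite /clamp /Num.max /Num.min; case: (ltP a hi) => ha /=; [case: (ltP lo a) | case: (ltP lo hi)] => hb /=. all: try nra. by rewrite subrr expr0n sqr_ge0.
Qed.
Lemma clamp_eq (lo hi a p : R) : lo <= p <= hi ->
  (a - p) ^+ 2 = (a - clamp lo hi a) ^+ 2 -> p = clamp lo hi a.
Proof.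
move=> /andP[h1 h2]; rewrite /clamp /Num.max /Num.min => E.
have E2 : (p - clamp lo hi a) * (p + clamp lo hi a - 2 * a) = 0.
  rewrite /clamp /Num.max /Num.min; lra.
move: E2; rewrite /clamp /Num.max /Num.min.
case: (ltP a hi) => ha /=; [case: (ltP lo a) | case: (ltP lo hi)] => hb /= /eqP;
  rewrite mulf_eq0 => /orP[/eqP|/eqP] ?; lra.
Qed.
Lemma Pi_coord {d} (c : 'rV[R]_d) r Pi x j : is_eucl_proj_ballinf c r Pi ->
  Pi x 0 j = clamp (c 0 j - r) (c 0 j + r) (x 0 j).
Proof.
move=> hP; have [hin hmin] := hP x.
have r0 : 0 <= r := le_trans (normr_ge0 _) (ball_coord _ _ _ j hin).
set y := \row_k clamp (c 0 k - r) (c 0 k + r) (x 0 k).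
have hy : in_ballinf c r y.
  apply/linf_leP; split=> // k; rewrite !mxE.
  have /andP[h1 h2] := @clamp_in (c 0 k - r) (c 0 k + r) (x 0 k) ltac:(lra).
  rewrite ler_norml; apply/andP; split; lra.
have hle := hmin y hy.
have hpk k : c 0 k - r <= Pi x 0 k <= c 0 k + r.
  have := ball_coord _ _ _ k hin; rewrite ler_norml => /andP[? ?]; apply/andP; split; lra.
have hz : \sum_(k < d) ((x 0 k - Pi x 0 k) ^+ 2 - (x 0 k - y 0 k) ^+ 2) = 0.
  apply/eqP; rewrite eq_le; apply/andP; split.
    by rewrite sumrB subr_le0.
  apply: sumr_ge0 => k _; rewrite subr_ge0 mxE; exact: clamp_best.
have hnn : forall k : 'I_d, true -> 0 <= (x 0 k - Pi x 0 k) ^+ 2 - (x 0 k - y 0 k) ^+ 2.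
  move=> k _; rewrite subr_ge0 mxE; exact: clamp_best.
have := psumr_eq0P hnn hz (i:=j) isT.
have := @clamp_eq _ _ (x 0 j) _ (hpk j).
rewrite /y mxE => h /eqP; rewrite subr_eq0 => /eqP; apply: h.
Qed.
Lemma RE_near {d B} (rs : ('I_B -> 'rV[R]_d) -> 'rV[R]_d) X vs j : 0 <= vs ->
  `|RobustEst rs X vs 0 j - rs X 0 j| <= vs.
Proof.
move=> h; rewrite mxE /=.
set xb := _ * _; set xr := rs X 0 j.
case: ifP => H.
  have /andP[h1 h2] := @clamp_in (xr - vs) (xr + vs) xb ltac:(lra).
  rewrite ler_norml; apply/andP; split; lra.
by rewrite distrC; apply/ltW; rewrite ltNge H.
Qed.
Lemma final_step (eta K u a b : R) : 0 < eta -> `|a - b| <= K ->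
  `|u - eta * a - (u - eta * b)| <= eta * K.
Proof.
move=> he h; have -> : u - eta * a - (u - eta * b) = eta * (b - a) by ring.
by rewrite normrM gtr0_norm // distrC ler_pM2l.
Qed.
End H.

Theorem lemma3p6 (R : realFieldType) (Zt : Type) (d m B T : nat)
  (hB : (3 < B)%N) (i1 : 'I_B) (t1 : 'I_T) (ht1 : nat_of_ord t1 = 0%N)
  (c : 'rV[R]_d) (r : R) (Pi : 'rV[R]_d -> 'rV[R]_d)
  (hPi : is_eucl_proj_ballinf c r Pi)
  (grad : 'rV[R]_d -> Zt -> 'rV[R]_d)
  (rs : ('I_B -> 'rV[R]_d) -> 'rV[R]_d) (hrs : robust_statistic rs)
  (eta vs rho : R) (heta : 0 < eta) (hvs : 0 <= vs) (hrho : 0 < rho)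
  (D' D'' : 'I_B -> 'I_T -> 'I_m -> Zt)
  (hD : forall i t, (i, t) <> (i1, t1) -> D' i t = D'' i t)
  (x0 : 'rV[R]_d) :
  rho_aligned rho (fun i => qgrad grad x0 (D' i t1))
                  (fun i => qgrad grad x0 (D'' i t1)) ->
  linf (SGDsub_step grad Pi rs eta vs (fun i => D' i t1) x0
        - SGDsub_step grad Pi rs eta vs (fun i => D'' i t1) x0)
    <= eta * (4 * rho + 2 * vs).
Proof.
move=> [X' [Y' [h1 h2]]].
set X := fun i => qgrad grad x0 (D' i t1) in h1 *.
set Y := fun i => qgrad grad x0 (D'' i t1) in h2 *.
have hXY : forall i, i != i1 -> X i = Y i.
  move=> i hi; rewrite /X /Y hD // => -[e]; move: hi; by rewrite e eqxx.
set S1 := [set i | in_ballinf X' rho (X i)] in h1.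
set S2 := [set i | in_ballinf Y' rho (Y i)] in h2.
have [i [hi hXi hYi]] : exists i, [/\ i != i1, in_ballinf X' rho (X i) & in_ballinf Y' rho (Y i)].
  case: (set_0Vmem ((S1 :&: S2) :\ i1)) => [E|[i]].
    have c1 := cardsD1 i1 (S1 :&: S2); rewrite E cards0 in c1.
    have c2 := cardsUI S1 S2.
    have c3 : (#|S1 :|: S2| <= B)%N by rewrite -[X in (_ <= X)%N]card_ord max_card.
    have c4 : ((i1 \in S1 :&: S2) <= 1)%N by case: (_ \in _).
    exfalso; lia.
  rewrite !inE => /and3P[a b e]; by exists i.
case: hrs => _ hball _ _.
have hrX : in_ballinf X' rho (rs X) by apply: hball; [exact: ltW | rewrite -/S1; lia].
have hrY : in_ballinf Y' rho (rs Y) by apply: hball; [exact: ltW | rewrite -/S2; lia].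
have key : forall j, `|RobustEst rs X vs 0 j - RobustEst rs Y vs 0 j| <= 4 * rho + 2 * vs.
  move=> j.
  have a1 := @RE_near R _ _ rs X vs j hvs; have a2 := @RE_near R _ _ rs Y vs j hvs.
  have a3 := ball_coord _ _ _ _ j hrX; have a4 := ball_coord _ _ _ _ j hrY.
  have a5 := ball_coord _ _ _ _ j hXi; have a6 := ball_coord _ _ _ _ j hYi.
  rewrite -(hXY _ hi) in a6.
  move: a1 a2 a3 a4 a5 a6; rewrite !ler_norml => /andP[? ?] /andP[? ?] /andP[? ?] /andP[? ?] /andP[? ?] /andP[? ?].
  apply/andP; split; lra.
apply/linf_leP; split.
  apply: mulr_ge0; [exact: ltW | lra].
move=> j; rewrite /SGDsub_step !mxE (Pi_coord _ _ _ _ _ _ hPi) (Pi_coord _ _ _ _ _ _ hPi).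
apply: le_trans (clamp_lip _ _ _ _ _) _.
move: (key j); rewrite !mxE => kj. by apply: final_step.
Qed.
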